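(* Let $\lambda\in\mathfrak{h}^*$ be integral with $\lambda+\rho$ dominant, and suppose $\Sigma=\{\alpha_{i_1},\dots,\alpha_{i_s}\}$ ($i_1<\dots<i_s$) contains no two adjacent simple roots. Identify $W^{\mathfrak{p}}$ with $\{0,1\}^n$ via LS words. (1) If $\alpha_n\notin\Sigma$, then $W^{\mathfrak{p},\Sigma}=\{d_1\dots d_n: d_{i_k}d_{i_k+1}=01 \text{ for } k=1,\dots,s\}$. (2) If $\alpha_n\in\Sigma$ (so $i_s=n$), then $W^{\mathfrak{p},\Sigma}=\{d_1\dots d_{n-1}0: d_{i_k}d_{i_k+1}=01\text{ for }k=1,\dots,s-1\}$.
   Context: Setup: $\mathfrak{g}=\mathfrak{sp}(2n,\mathbb{C})$, weights $[\lambda_1,\dots,\lambda_n]$; integral means all $\lambda_i\in\mathbb{Z}$, dominant means $\lambda_1\ge\dots\ge\lambda_n\ge 0$. Positive roots $a_{ij}=\epsilon_i-\epsilon_j$, $b_i=2\epsilon_i$, $c_{ij}=\epsilon_i+\epsilon_j$, $c_{ii}:=b_i$; simple roots $\alpha_i=\epsilon_i-\epsilon_{i+1}$ ($i<n$), $\alpha_n=2\epsilon_n$; $\rho=[n,\dots,1]$. $\mathfrak{p}$ is the parabolic with Levi containing $\alpha_1,\dots,\alpha_{n-1}$, $\Delta(\mathfrak{u})=\{c_{ij}:i\le j\}$; $\Phi_w=\{\alpha>0:w^{-1}\alpha<0\}$; $W^{\mathfrak{p}}=\{w\in W:\Phi_w\subseteq\Delta(\mathfrak{u})\}$. Simple singular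 roots: $\Sigma=\{\alpha\text{ simple}:\langle\lambda+\rho,\alpha^\vee\rangle=0\}$. Singular Hasse diagram: $W^{\mathfrak{p},\Sigma}=\{w\in W^{\mathfrak{p}}: w\sigma_\alpha\in W^{\mathfrak{p}}\text{ and } l(w\sigma_\alpha)>l(w)\text{ for all }\alpha\in\Sigma\}$. LS word of $w\in W^{\mathfrak{p}}$: the unique $d\in\{0,1\}^n$ with $\Phi_w=S(d)$, where for $d$ with ones exactly at positions $j_1<\dots<j_k$, $S(d)=\{c_{r,\,n+1-m}:1\le m\le k,\ j_m-m+1\le r\le n+1-m\}$. *)

(* Defs.v *)
(* Indices are 0-based: paper index i (1..n) is ordinal i-1. *)
From HB Require Import structures.
From mathcomp Require Import all_boot all_order all_algebra all_fingroup.
Set Implicit Arguments. Unset Strict Implicit. Unset Printing Implicit Defensive.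
Import GRing.Theory Num.Theory.
Local Open Scope ring_scope.

Section C.
Variable n : nat.

(* Weyl group of C_n: signed permutations.  w = (p, s) acts by
   w e_i = (-1)^(s i) e_(p i). *)
Definition W := ({perm 'I_n} * {ffun 'I_n -> bool})%type.

Definition idW : W := (1%g, [ffun=> false]).

(* product w1 w2 (as linear maps: first w2, then w1) *)
Definition mulW (w1 w2 : W) : W :=
  ((w2.1 * w1.1)%g, [ffun i => w2.2 i (+) w1.2 (w2.1 i)]).

(* action of w^{-1} on a vector v in Z^n *)
Definition actinv (w : W) (v : {ffun 'I_n -> int}) : {ffun 'I_n -> int} :=
  [ffun i => (-1) ^+ (w.2 i) * v (w.1 i)].

Definition nxt (k : 'I_n) : 'I_n := insubd k k.+1.

(* simple reflections: sigma_{alpha_k}; alpha_k = e_k - e_{k+1} for k+1<n,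
   alpha_{n-1} = 2 e_{n-1} (0-based) *)
Definition sref (k : 'I_n) : W :=
  if (k.+1 < n)%N then (tperm k (nxt k), [ffun=> false])
  else (1%g, [ffun i => i == k]).

Fixpoint reach (k : nat) : seq W :=
  if k is k'.+1 then [seq mulW x (sref j) | x <- reach k', j <- enum 'I_n]
  else [:: idW].

(* Coxeter length: least number of simple reflections in a word for w
   (every shortest word has length < |W|) *)
Definition len (w : W) : nat :=
  find (fun k => w \in reach k) (iota 0 #|{: W}|).

(* root labels: (i, j, false) = a_ij = e_i - e_j (i<j),
                (i, j, true)  = c_ij = e_i + e_j (i<=j), c_ii = b_i = 2e_i *)
Definition RL := ('I_n * 'I_n * bool)%type.
Definition posroot (r : RL) : bool :=
  if r.2 then (r.1.1 <= r.1.2)%N else (r.1.1 < r.1.2)%N.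
Definition rvec (r : RL) : {ffun 'I_n -> int} :=
  [ffun k => if r.2 then ((k == r.1.1)%:Z + (k == r.1.2)%:Z)
             else ((k == r.1.1)%:Z - (k == r.1.2)%:Z)].
Definition negrootv (v : {ffun 'I_n -> int}) : bool :=
  [exists r : RL, posroot r && (rvec r == [ffun k => - v k])].

Definition Phi (w : W) : {set RL} :=
  [set r : RL | posroot r && negrootv (actinv w (rvec r))].

Definition Delta_u : {set RL} := [set r : RL | r.2 && (r.1.1 <= r.1.2)%N].

Definition inWp (w : W) : bool := Phi w \subset Delta_u.

(* <lambda + rho, alpha_k^vee> with rho = [n, ..., 1] *)
Definition lrho (lam : 'I_n -> int) (i : 'I_n) : int := lam i + (n - i)%:Z.
Definition pairing (lam : 'I_n -> int) (k : 'I_n) : int :=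
  if (k.+1 < n)%N then lrho lam k - lrho lam (nxt k) else lrho lam k.
Definition singular (lam : 'I_n -> int) (k : 'I_n) : bool := pairing lam k == 0.

Definition inWpS (lam : 'I_n -> int) (w : W) : Prop :=
  inWp w /\ forall k : 'I_n, singular lam k ->
    inWp (mulW w (sref k)) /\ (len w < len (mulW w (sref k)))%N.

(* S(d): ones of d at 0-based positions p_0 < ... < p_{k-1}; for 0-based m
   (paper m+1) the roots c_{r, n-1-m} (0-based) with p_m - m <= r <= n-1-m *)
Definition ones (d : 'I_n -> bool) : seq nat := [seq val i | i <- enum 'I_n & d i].
Definition S (d : 'I_n -> bool) : {set RL} :=
  [set r : RL | r.2 && has (fun m => [&& (r.1.2 == (n - m.+1)%N :> nat),
                                         (nth 0 (ones d) m - m <= r.1.1)%N &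
                                         (r.1.1 <= n - m.+1)%N])
                          (iota 0 (size (ones d)))].

(* Under the LS-word identification, W^{p,Sigma} equals {d | P d}:
   every w in W^{p,Sigma} with LS word d satisfies P d, and every d with
   P d is the LS word of some w in W^{p,Sigma}. *)
Definition WpS_is (lam : 'I_n -> int) (P : ('I_n -> bool) -> Prop) : Prop :=
  (forall (w : W) (d : 'I_n -> bool), inWpS lam w -> Phi w = S d -> P d) /\
  (forall d : 'I_n -> bool, P d -> exists w : W, inWpS lam w /\ Phi w = S d).

End C.

(* Main.v *)
Require Import Defs.
From mathcomp Require Import all_boot all_order all_algebra all_fingroup.
From mathcomp Require Import zify.
Import GRing.Theory Num.Theory.

Ltac slia := simpl in *; lia.


Definition sgb (b : bool) : int := if b then (-1)%R else 1%R.

Definition tvb n (bx : bool) (x : 'I_n) (by_ : bool) (y : 'I_n) : {ffun 'I_n -> int} :=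
  [ffun i => (sgb bx * (i == x)%:Z + sgb by_ * (i == y)%:Z)%R].
Arguments tvb {n}.

Lemma negrootv_first {n} (v : {ffun 'I_n -> int}) : negrootv v ->
  exists a : 'I_n, (0 < - v a)%R /\ forall x : 'I_n, (x < a)%N -> v x = 0%R.
Proof.
case/existsP => -[[a b] c] /andP [pr /eqP/ffunP e].
exists a; split.
- have := e a; rewrite !ffunE /= eqxx.
  move: pr; rewrite /posroot /=; case: c {e} => h /=; case: eqP => [ab|]; try lia.
  by rewrite -ab in h; rewrite ltnn in h.
- move=> x hx; have := e x; rewrite !ffunE /=.
  have xa : (x == a) = false by apply/eqP => xa; rewrite xa ltnn in hx.
  have xb : (x == b) = false.
    apply/eqP => xb; move: pr; rewrite /posroot /= -xb; case: c {e} => /=; lia.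
  rewrite xa xb; case: c {e pr} => /=; lia.
Qed.

Lemma neg_tvb_lt {n} (bx : bool) (x : 'I_n) (by_ : bool) (y : 'I_n) : (x < y)%N -> negrootv (tvb bx x by_ y) = bx.
Proof.
move=> xy; have yx : (y == x) = false by apply/eqP => e; rewrite e ltnn in xy.
apply/idP/idP.
- case/negrootv_first => a [ha h0].
  have ax : ~~ (x < a)%N.
    apply/negP => /h0; rewrite !ffunE eqxx eq_sym yx /=; case: bx {ha h0} => /=; lia.
  move: ha; rewrite !ffunE.
  case: (a =P x) => [->|nax]; first by rewrite eq_sym yx; case: bx {h0} => /=; lia.
  case: (a =P y) => [ay|nay]; last by rewrite /=; lia.
  by rewrite ay xy in ax.
- move=> hb; apply/existsP; exists (x, y, by_); rewrite /posroot /=.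
  case: by_ => /=; rewrite ?(ltnW xy) ?xy /=; apply/eqP/ffunP => i; rewrite !ffunE /= hb;
  rewrite /sgb; case: (i == x); case: (i == y) => /=; lia.
Qed.

Lemma tvbC {n} (bx : bool) (x : 'I_n) (by_ : bool) (y : 'I_n) : tvb bx x by_ y = tvb by_ y bx x.
Proof. by apply/ffunP => i; rewrite !ffunE addrC. Qed.

Lemma neg_tvb_gt {n} (bx : bool) (x : 'I_n) (by_ : bool) (y : 'I_n) : (y < x)%N -> negrootv (tvb bx x by_ y) = by_.
Proof. by move=> yx; rewrite tvbC neg_tvb_lt. Qed.

Lemma neg_tvb_eq {n} (bx : bool) (x : 'I_n) : negrootv (tvb bx x bx x) = bx.
Proof.
apply/idP/idP.
- case/negrootv_first => a [ha _]; move: ha; rewrite !ffunE.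
  case: (a =P x) => [_|_] /=; case: bx => /=; lia.
- move=> hb; apply/existsP; exists (x, x, true); rewrite /posroot /= leqnn /=.
  apply/eqP/ffunP => i; rewrite !ffunE /= hb /sgb; case: (i == x) => /=; lia.
Qed.

Lemma perm_eqV {n} (p : {perm 'I_n}) (i a : 'I_n) : (p i == a) = (i == (p^-1)%g a).
Proof. by apply/eqP/eqP => [<-|->]; rewrite ?permK ?permKV. Qed.

Lemma expr_sgb (b : bool) : ((-1) ^+ b)%R = sgb b.
Proof. by case: b. Qed.

Lemma actinv_rvec {n} (w : W n) (a b : 'I_n) (c : bool) :
  actinv w (rvec (a, b, c)) =
  tvb (w.2 ((w.1^-1)%g a)) ((w.1^-1)%g a) (w.2 ((w.1^-1)%g b) (+) ~~ c) ((w.1^-1)%g b).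
Proof.
apply/ffunP => i; rewrite !ffunE /= !perm_eqV expr_sgb.
case: (a =P b) => [<-|nab].
  case ha: (i == (w.1^-1)%g a); rewrite ?(eqP ha) /sgb;
  case: (w.2 _); case: c => /=; lia.
have hab : (i == (w.1^-1)%g a) && (i == (w.1^-1)%g b) = false.
  apply/negP => /andP [/eqP -> /eqP] /(congr1 w.1); rewrite !permKV; exact: nab.
move: hab.
case ha: (i == (w.1^-1)%g a); case hb: (i == (w.1^-1)%g b);
  rewrite ?(eqP ha) ?(eqP hb); rewrite /sgb;
  case: (w.2 _); case: (w.2 _); case: c => //=; lia.
Qed.

Definition phicond n (w : W n) (r : RL n) : bool :=
  if r.1.1 == r.1.2 then w.2 ((w.1^-1)%g r.1.1)
  else if ((w.1^-1)%g r.1.1 < (w.1^-1)%g r.1.2)%N then w.2 ((w.1^-1)%g r.1.1)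
  else w.2 ((w.1^-1)%g r.1.2) (+) ~~ r.2.
Arguments phicond {n}.

Lemma negphi {n} (w : W n) (r : RL n) : posroot r ->
  negrootv (actinv w (rvec r)) = phicond w r.
Proof.
case: r => [[a b] c]; rewrite /posroot /phicond /= actinv_rvec.
case: (a =P b) => [<-|nab].
  case: c => /= h; last by rewrite ltnn in h.
  rewrite addbF.
  by have := @neg_tvb_eq n (w.2 ((w.1^-1)%g a)) ((w.1^-1)%g a); move=> ->.
move=> _; have nq : (w.1^-1)%g a != (w.1^-1)%g b.
  by apply/negP => /eqP /(congr1 w.1); rewrite !permKV.
case: ltnP => h.
  by have := @neg_tvb_lt n (w.2 ((w.1^-1)%g a)) ((w.1^-1)%g a)
    (w.2 ((w.1^-1)%g b) (+) ~~ c) ((w.1^-1)%g b) h; move=> ->.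
have h' : ((w.1^-1)%g b < (w.1^-1)%g a)%N.
  rewrite ltn_neqAle h andbT; apply/eqP => e; move/eqP: nq; apply; exact/val_inj.
by have := @neg_tvb_gt n (w.2 ((w.1^-1)%g a)) ((w.1^-1)%g a)
    (w.2 ((w.1^-1)%g b) (+) ~~ c) ((w.1^-1)%g b) h'; move=> ->.
Qed.

Lemma PhiE {n} (w : W n) (r : RL n) : (r \in Phi w) = posroot r && phicond w r.
Proof.
rewrite inE; case pr: (posroot r) => //=; exact: negphi.
Qed.


Lemma val_nxt {n} (k : 'I_n) : (k.+1 < n)%N -> nat_of_ord (nxt k) = k.+1.
Proof. by move=> h; rewrite /nxt val_insubd h. Qed.

Lemma ordE {n} (u v : 'I_n) : (u == v) = (val u == val v).
Proof. by []. Qed.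

Lemma tperm_lt {n} (k : 'I_n) (u v : 'I_n) : (k.+1 < n)%N -> u != v ->
  (tperm k (nxt k) u < tperm k (nxt k) v)%N =
  if ((u == k) && (v == nxt k)) || ((u == nxt k) && (v == k)) then ~~ (u < v)%N
  else (u < v)%N.
Proof.
move=> hk; have hv := @val_nxt n k hk.
have hv' : val (nxt k) = k.+1 by exact: hv.
move=> nuv; move: nuv; rewrite !permE /= !ordE ?hv ?hv' => nuv.
case: (val u =P val k) => h1; case: (val u =P k.+1) => h2;
case: (val v =P val k) => h3; case: (val v =P k.+1) => h4; rewrite /= ?hv; simpl in *; lia.
Qed.

Definition r0 n (w : W n) (k : 'I_n) : RL n :=
  if (k.+1 < n)%N then
    if (w.1 k < w.1 (nxt k))%N then (w.1 k, w.1 (nxt k), w.2 k (+) w.2 (nxt k))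
    else (w.1 (nxt k), w.1 k, w.2 k (+) w.2 (nxt k))
  else (w.1 k, w.1 k, true).
Arguments r0 {n}.

Lemma mulW_q_lt {n} (w : W n) (k : 'I_n) (a : 'I_n) : (k.+1 < n)%N ->
  (((mulW w (sref k)).1)^-1)%g a = tperm k (nxt k) ((w.1^-1)%g a).
Proof. by move=> hk; rewrite /mulW /sref hk /= invMg tpermV permM. Qed.

Lemma mulW_s_lt {n} (w : W n) (k : 'I_n) (i : 'I_n) : (k.+1 < n)%N ->
  (mulW w (sref k)).2 i = w.2 (tperm k (nxt k) i).
Proof. by move=> hk; rewrite /mulW /sref hk /= !ffunE. Qed.

Lemma mulW_q_last {n} (w : W n) (k : 'I_n) (a : 'I_n) : ~~ (k.+1 < n)%N ->
  (((mulW w (sref k)).1)^-1)%g a = (w.1^-1)%g a.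
Proof. by move=> hk; rewrite /mulW /sref (negbTE hk) /= mul1g. Qed.

Lemma mulW_s_last {n} (w : W n) (k : 'I_n) (i : 'I_n) : ~~ (k.+1 < n)%N ->
  (mulW w (sref k)).2 i = (i == k) (+) w.2 i.
Proof. by move=> hk; rewrite /mulW /sref (negbTE hk) /= !ffunE perm1. Qed.

Lemma perm_eq_inj {n} (p : {perm 'I_n}) (u v : 'I_n) : (p u == p v) = (u == v).
Proof. exact: (inj_eq (@perm_inj _ p)). Qed.

Lemma phicond_mul_lt {n} (w : W n) (k : 'I_n) (r : RL n) : (k.+1 < n)%N -> posroot r ->
  phicond (mulW w (sref k)) r = phicond w r (+) (r == r0 w k).
Proof.
move=> hk; case: r => [[a b] c].
have [u ->] : exists u, a = w.1 u by exists ((w.1^-1)%g a); rewrite permKV.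
have [v ->] : exists v, b = w.1 v by exists ((w.1^-1)%g b); rewrite permKV.
rewrite /posroot /= => pr.
rewrite /phicond /r0 /= hk !mulW_q_lt // !permK !mulW_s_lt // !tpermK perm_eq_inj.
have hv := @val_nxt n k hk.
have kk : (k < nxt k)%N by rewrite hv.
have nk1 : (k == nxt k) = false by apply/negbTE; rewrite neq_ltn kk.
have nk2 : (nxt k == k) = false by rewrite eq_sym.
set k' := nxt k in hv kk nk1 nk2 *.
case: (u =P v) => [<-|nuv].
  by case: ifP => _; rewrite !xpair_eqE !perm_eq_inj; case: (u =P k) => [->|]; rewrite ?nk1 ?nk2 ?andbF /= ?addbF.
rewrite tperm_lt //; last by apply/eqP.
rewrite -/k' (fun_if (eq_op (w.1 u, w.1 v, c))) !xpair_eqE !perm_eq_inj.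
have pk : w.1 k != w.1 k' by rewrite perm_eq_inj nk1.
case: (u =P k) => [eu|nu1]; case: (v =P k') => [ev|nv1];
case: (u =P k') => [eu'|nu2]; case: (v =P k) => [ev'|nv2]; rewrite /=;
try (by move: nk1; rewrite -{1}eu eu'; rewrite eqxx);
try (by move: nk1; rewrite -{1}ev' ev; rewrite eqxx).
all: try by rewrite if_same addbF.
- rewrite eu ev kk /=; move: pr; rewrite eu ev; case: ltngtP => h //=;
    try (by case: (w.2 k); case: (w.2 k'); case: c);
    by move: pk; rewrite -(inj_eq val_inj) /= h eqxx.
- rewrite eu' ev' (ltnNge k' k) (ltnW kk) /=; move: pr; rewrite eu' ev'; case: ltngtP => h //=;
    try (by case: (w.2 k); case: (w.2 k'); case: c);
    by move: pk; rewrite -(inj_eq val_inj) /= h eqxx.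
Qed.

Lemma phicond_mul_last {n} (w : W n) (k : 'I_n) (r : RL n) : ~~ (k.+1 < n)%N -> posroot r ->
  phicond (mulW w (sref k)) r = phicond w r (+) (r == r0 w k).
Proof.
move=> hk; case: r => [[a b] c].
have [u ->] : exists u, a = w.1 u by exists ((w.1^-1)%g a); rewrite permKV.
have [v ->] : exists v, b = w.1 v by exists ((w.1^-1)%g b); rewrite permKV.
rewrite /posroot /= => pr.
rewrite /phicond /r0 /= (negbTE hk) !mulW_q_last // !permK !mulW_s_last // perm_eq_inj.
rewrite !xpair_eqE !perm_eq_inj.
have kmax : forall z : 'I_n, (z <= k)%N.
  by move=> z; have := ltn_ord z; move: hk; rewrite -leqNgt; lia.
move: pr; case: (u =P v) => [<-|nuv] pr.
  move: pr; case: c => /= pr; last by move: pr; rewrite ltnn.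
  by case: (u == k); case: (w.2 u).
have nuv' : (val u != val v) by apply/eqP => e; apply: nuv; exact: val_inj.
case: ltnP => h.
  have -> : (u == k) = false.
    apply/negbTE/eqP => e; have := kmax v; rewrite -e; move: nuv'; simpl in *; lia.
  by rewrite /= addbF.
have -> : (v == k) = false.
  apply/negbTE/eqP => e; have := kmax u; rewrite -e; move: nuv'; simpl in *; lia.
by rewrite /= !andbF addbF.
Qed.

Lemma phicond_mul {n} (w : W n) (k : 'I_n) (r : RL n) : posroot r ->
  phicond (mulW w (sref k)) r = phicond w r (+) (r == r0 w k).
Proof.
case hk: (k.+1 < n)%N; first exact: phicond_mul_lt.
by apply: phicond_mul_last; rewrite hk.
Qed.

Lemma posroot_r0 {n} (w : W n) (k : 'I_n) : posroot (r0 w k).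
Proof.
rewrite /r0; case: ifP => hk; last by rewrite /posroot /= leqnn.
have hv := @val_nxt n k hk.
have pk : (w.1 k : nat) != w.1 (nxt k).
  by rewrite (inj_eq val_inj) perm_eq_inj; apply/eqP => /(congr1 val) /=; rewrite hv; lia.
case: ltngtP => h; rewrite /posroot /=; case: (_ (+) _) => //=; rewrite ?h ?(ltnW h) //.
by move: pk; rewrite h eqxx.
Qed.

Lemma Phi_mul {n} (w : W n) (k : 'I_n) :
  Phi (mulW w (sref k)) = if r0 w k \in Phi w then Phi w :\ r0 w k else r0 w k |: Phi w.
Proof.
apply/setP => r; rewrite [r \in Phi (mulW _ _)]PhiE.
have pr0 := @posroot_r0 n w k.
case pr: (posroot r); last first.
  case: ifP => _; rewrite ?in_setD1 ?in_setU1 PhiE pr ?andbF ?orbF //=.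
  by apply/esym/eqP => e; rewrite e pr0 in pr.
rewrite /= phicond_mul //.
case: ifP => h; rewrite ?in_setD1 ?in_setU1 PhiE pr /=; case: (r =P r0 w k) => [e|ne] /=;
  rewrite ?addbT ?addbF //; move: h; rewrite PhiE pr0 /= -e; by [move=> -> | move/negbT].
Qed.



Lemma card_Phi_mul {n} (w : W n) (k : 'I_n) :
  #|Phi (mulW w (sref k))| = if r0 w k \in Phi w then #|Phi w| - 1 else #|Phi w| + 1.
Proof.
rewrite Phi_mul; case: ifP => h.
  by have := cardsD1 (r0 w k) (Phi w); rewrite h /= => ->; rewrite add1n subn1.
by rewrite cardsU1 h addnC.
Qed.

Lemma mulW_srefK {n} (w : W n) (k : 'I_n) : mulW (mulW w (sref k)) (sref k) = w.
Proof.
case: w => p s; rewrite /mulW /sref; case: ifP => hk /=.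
  congr pair; first by rewrite mulgA tperm2 mul1g.
  by apply/ffunP => i; rewrite !ffunE /= tpermK.
congr pair; first by rewrite !mul1g.
by apply/ffunP => i; rewrite !ffunE !perm1 addbA addbb.
Qed.

Lemma Phi_id {n} : Phi (idW n) = set0.
Proof.
apply/setP => r; rewrite PhiE inE /phicond /idW /= !ffunE invg1 !perm1.
case: r => [[a b] c]; rewrite /posroot /=.
by case: c => /=; case: (a == b); case: (ltnP a b) => //=; rewrite ?andbF.
Qed.

Lemma reach_le {n} k (w : W n) : w \in reach n k -> (#|Phi w| <= k)%N.
Proof.
elim: k w => [|k IH] w /=.
  by rewrite inE => /eqP ->; rewrite Phi_id cards0.
case/allpairsP => -[x j] [/= hx _ ->]; rewrite card_Phi_mul.
have := IH _ hx; case: ifP => _; lia.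
Qed.

Lemma r0_in {n} (w : W n) (k : 'I_n) : (r0 w k \in Phi w) =
  if (k.+1 < n)%N then (if (w.1 k < w.1 (nxt k))%N then w.2 k else ~~ w.2 (nxt k))
  else w.2 k.
Proof.
rewrite PhiE posroot_r0 /= /r0 /phicond; case hk: (k.+1 < n)%N => /=; last by rewrite eqxx permK.
have hv := @val_nxt n k hk.
have nk : (w.1 k == w.1 (nxt k)) = false.
  by rewrite perm_eq_inj; apply/eqP => /(congr1 val) /=; rewrite hv; lia.
have nk' : (w.1 (nxt k) == w.1 k) = false by rewrite eq_sym.
have l1 : (k < nxt k)%N by rewrite hv.
have l2 : (nxt k < k)%N = false by rewrite hv ltnNge leqnSn.
case: (ltnP (w.1 k) (w.1 (nxt k))) => h /=; rewrite ?nk ?nk' !permK ?l1 ?l2 //.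
by case: (w.2 k); case: (w.2 (nxt k)).
Qed.

Lemma incr_perm1 {n} (f : {perm 'I_n}) :
  (forall j : 'I_n, (j.+1 < n)%N -> (f j < f (nxt j))%N) -> f = 1%g.
Proof.
move=> inc.
have up : forall m (j : 'I_n), val j = m -> (m <= f j)%N.
  elim=> [|m IH] j hj //.
  have hm : (m < n)%N by have := ltn_ord j; rewrite hj; slia.
  have hm1 : (m.+1 < n)%N by rewrite -hj; exact: ltn_ord.
  have := inc (Ordinal hm) hm1; have := IH (Ordinal hm) erefl.
  have -> : nxt (Ordinal hm) = j.
    by apply/val_inj; rewrite /= /nxt val_insubd /= hm1 hj.
  slia.
have down : forall m (j : 'I_n), (val j + m = n.-1)%N -> (f j + m <= n.-1)%N.
  elim=> [|m IH] j hj.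
    by rewrite addn0; have := ltn_ord (f j); slia.
  have hj1 : (j.+1 < n)%N by have := ltn_ord j; slia.
  have hv := @val_nxt n j hj1.
  have := IH (nxt j) ltac:(slia).
  have := inc j hj1; slia.
apply/permP => j; rewrite perm1; apply/val_inj.
have := up _ j erefl; have := down (n.-1 - j) j ltac:(have := ltn_ord j; slia).
have := ltn_ord j; slia.
Qed.

Lemma descent {n} (w : W n) : w != idW n -> exists k, r0 w k \in Phi w.
Proof.
move=> nid; apply/existsP; move: nid; apply: contraR; rewrite negb_exists => /forallP hn.
have hs : forall m (j : 'I_n), (val j + m = n.-1)%N ->
    w.2 j = false /\ ((j.+1 < n)%N -> (w.1 j < w.1 (nxt j))%N).
  elim=> [|m IH] j hj.
    have hk : ~~ (j.+1 < n)%N by slia.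
    by have := hn j; rewrite r0_in (negbTE hk) => /negbTE.
  have hj1 : (j.+1 < n)%N by have := ltn_ord j; slia.
  have hv := @val_nxt n j hj1.
  have [h1 _] := IH (nxt j) ltac:(slia).
  have := hn j; rewrite r0_in hj1 h1 /=.
  by case: ifP => // h2 /negbTE.
have e1 : w.1 = 1%g.
  apply: incr_perm1 => j hj.
  by have [_] := hs (n.-1 - j) j ltac:(have := ltn_ord j; slia); apply.
have e2 : w.2 = [ffun=> false].
  apply/ffunP => j; rewrite ffunE.
  by have [] := hs (n.-1 - j) j ltac:(have := ltn_ord j; slia).
by apply/eqP; case: w e1 e2 {hn hs} => p s /= -> ->.
Qed.

Lemma reach_Phi {n} (w : W n) : w \in reach n #|Phi w|.
Proof.
suff H : forall m (w : W n), #|Phi w| = m -> w \in reach n m by exact: H.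
elim=> [|m IH] {}w hm.
  case: (w =P idW n) => [->|/eqP nid]; first by rewrite /reach mem_seq1.
  have [k hk] := @descent n w nid.
  by move: hm; rewrite (cardsD1 (r0 w k)) hk.
have nid : w != idW n by apply/eqP => e; move: hm; rewrite e Phi_id cards0.
have [k hk] := @descent n w nid.
have h1 := card_Phi_mul w k; rewrite hk hm subn1 /= in h1.
have h2 := IH _ h1.
apply/allpairsP; exists (mulW w (sref k), k); split => //.
  by rewrite mem_enum.
by rewrite mulW_srefK.
Qed.

Lemma card_Phi_le {n} (w : W n) : (#|Phi w| <= n * n)%N.
Proof.
pose f (r : RL n) : 'I_n * 'I_n := if r.2 then r.1 else (r.1.2, r.1.1).
have inj : {in Phi w &, injective f}.
  move=> [[a b] c] [[a' b'] c']; rewrite !PhiE => /andP [p1 _] /andP [p2 _].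
  move: p1 p2; rewrite /f /posroot /=.
  case: c; case: c' => /= h1 h2 [e1 e2]; rewrite ?e1 ?e2 //;
    move: h1 h2; rewrite ?e1 ?e2; slia.
rewrite -(card_in_imset inj).
apply: leq_trans (max_card _) _; by rewrite card_prod card_ord.
Qed.

Lemma card_Phi_lt {n} (w : W n) : (#|Phi w| < #|{: W n}|)%N.
Proof.
apply: leq_ltn_trans (card_Phi_le w) _.
rewrite card_prod card_Sn card_ffun card_bool card_ord.
case: n w => [|n] w //=.
have h1 : (n.+1 < 2 ^ n.+1)%N by apply: ltn_expl.
have h2 : (n.+1 <= n.+1`!)%N by rewrite factS leq_pmulr // fact_gt0.
apply: (@leq_trans (n.+1 * 2 ^ n.+1)); first by rewrite ltn_pmul2l.
by rewrite leq_mul2r h2 orbT.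
Qed.

Lemma len_Phi {n} (w : W n) : len w = #|Phi w|.
Proof.
rewrite /len; set N := #|{: W n}|; set P := fun k => w \in reach n k.
have hm := card_Phi_lt w; rewrite -/N in hm.
have hP : has P (iota 0 N).
  by apply/hasP; exists #|Phi w|; [rewrite mem_iota | exact: reach_Phi].
have hs := has_find P (iota 0 N); rewrite hP size_iota in hs.
apply/eqP; rewrite eqn_leq; apply/andP; split.
  rewrite leqNgt; apply/negP => h.
  have := before_find 0 h; rewrite nth_iota // add0n /P reach_Phi //.
have := nth_find 0 hP; rewrite nth_iota -?hs // add0n /P => /reach_le.
by [].
Qed.



Lemma step_cond {n} (w : W n) (k : 'I_n) : inWp w ->
  (inWp (mulW w (sref k)) /\ (len w < len (mulW w (sref k)))%N) <->
  ~~ (r0 w k \in Phi w) /\ (r0 w k).2.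
Proof.
move=> hw; rewrite /inWp in hw *; rewrite !len_Phi card_Phi_mul Phi_mul.
case h: (r0 w k \in Phi w) => /=.
  split => [[_]|[]] //.
  have : (0 < #|Phi w|)%N by apply/card_gt0P; exists (r0 w k).
  slia.
rewrite subUset sub1set hw andbT inE.
have := posroot_r0 w k; rewrite /posroot.
case: (r0 w k).2 => /= hp; split => [[]|[]] //; rewrite ?hp //; slia.
Qed.

Lemma cond_lt {n} (w : W n) (k : 'I_n) : inWp w -> (k.+1 < n)%N ->
  (inWp (mulW w (sref k)) /\ (len w < len (mulW w (sref k)))%N) <->
  (w.2 k = false /\ w.2 (nxt k) = true).
Proof.
move=> hw hk; rewrite step_cond // r0_in hk /r0 hk.
case: ifP => _ /=; case: (w.2 k); case: (w.2 (nxt k)); split => //=; by case.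
Qed.

Lemma cond_last {n} (w : W n) (k : 'I_n) : inWp w -> ~~ (k.+1 < n)%N ->
  (inWp (mulW w (sref k)) /\ (len w < len (mulW w (sref k)))%N) <->
  (w.2 k = false).
Proof.
move=> hw hk; rewrite step_cond // r0_in (negbTE hk) /r0 (negbTE hk) /=.
by case: (w.2 k); split => //; case.
Qed.



Lemma Phi_inj {n} (w1 w2 : W n) : Phi w1 = Phi w2 -> w1 = w2.
Proof.
move=> e.
have ph : forall r, posroot r -> phicond w1 r = phicond w2 r.
  by move=> r pr; move: (e) => /setP /(_ r); rewrite !PhiE pr.
have hs : forall a, w1.2 ((w1.1^-1)%g a) = w2.2 ((w2.1^-1)%g a).
  move=> a; have := ph (a, a, true); rewrite /posroot /phicond /= eqxx leqnn; by apply.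
have hlt : forall a b : 'I_n, (a < b)%N ->
    ((w1.1^-1)%g a < (w1.1^-1)%g b)%N = ((w2.1^-1)%g a < (w2.1^-1)%g b)%N.
  move=> a b hab.
  have nab : (a == b) = false by apply/negbTE; rewrite neq_ltn hab.
  have := ph (a, b, true); have := ph (a, b, false).
  rewrite /posroot /phicond /= nab hab (ltnW hab) => /(_ erefl) e1 /(_ erefl) e2.
  have key : forall w : W n, ((w.1^-1)%g a < (w.1^-1)%g b)%N =
     ((if ((w.1^-1)%g a < (w.1^-1)%g b)%N then w.2 ((w.1^-1)%g a) else w.2 ((w.1^-1)%g b) (+) ~~ true) ==
      (if ((w.1^-1)%g a < (w.1^-1)%g b)%N then w.2 ((w.1^-1)%g a) else w.2 ((w.1^-1)%g b) (+) ~~ false)).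
    by move=> w; case: ifP => _; rewrite ?eqxx //; case: (w.2 _).
  by rewrite key e1 e2 -key.
have hlt2 : forall a b : 'I_n, ((w1.1^-1)%g a < (w1.1^-1)%g b)%N -> ((w2.1^-1)%g a < (w2.1^-1)%g b)%N.
  move=> a b h; case: (ltngtP a b) => hab.
  - by rewrite -hlt.
  - have n2 : ((w2.1^-1)%g a : nat) != (w2.1^-1)%g b.
      rewrite (inj_eq val_inj); apply/negP => /eqP /(congr1 w2.1); rewrite !permKV => e'.
      by rewrite e' ltnn in hab.
    have e3 := hlt _ _ hab.
    have : ((w1.1^-1)%g b < (w1.1^-1)%g a)%N = false by apply/negbTE; rewrite -leqNgt ltnW.
    rewrite e3 => e4; move: n2 e4; slia.
  - by move: h; rewrite (val_inj hab) ltnn.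
have hq : w2.1 = w1.1.
  have f1 : (w1.1 * (w2.1^-1))%g = 1%g.
    apply: incr_perm1 => y hy; rewrite !permM; apply: hlt2; rewrite !permK.
    by rewrite val_nxt.
  apply/permP => y; have := congr1 (fun f : {perm 'I_n} => f y) f1.
  rewrite permM perm1 => /(congr1 w2.1); rewrite permKV => <-; by [].
case: w1 w2 hq hs {e ph hlt hlt2} => [p1 s1] [p2 s2] /= hq hs.
rewrite hq in hs *; congr pair; apply/ffunP => x.
by have := hs (p1 x); rewrite permK.
Qed.



Lemma sorted_nth_lt (s : seq nat) r x : sorted ltn s -> (r < size s)%N ->
  (nth 0 s r < x)%N = (r < count (fun y => y < x)%N s)%N.
Proof.
elim: s r => [|h s IH] r //= hs hr.
have hs' := path_sorted hs.
have hall : all (fun y => h < y)%N s.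
  by apply: order_path_min hs; exact: ltn_trans.
case: r hr => [|r] hr /=.
  case: ltnP => hx //=; apply/esym/negbTE; rewrite -leqNgt leqn0; apply/eqP.
  apply/eqP; rewrite -leqn0 leqNgt -has_count; apply/negP => /hasP [y ys yx].
  by have := allP hall y ys; slia.
rewrite IH //; case hx: (h < x)%N => /=; first by rewrite add1n ltnS.
have -> : count (fun y => y < x)%N s = 0.
  apply/eqP; rewrite -leqn0 leqNgt -has_count; apply/negP => /hasP [y ys yx].
  by have := allP hall y ys; slia.
by [].
Qed.

Lemma count_filterC {T : Type} (a p : pred T) (s : seq T) :
  (count a (filter p s) + count a (filter (predC p) s))%N = count a s.
Proof. by elim: s => //= x s IH; case: (p x) => /=; rewrite -IH; lia. Qed.

Lemma count_iota_lt x m : count (fun y => y < x)%N (iota 0 m) = minn x m.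
Proof.
elim: m => [|m IH]; first by rewrite minn0.
by rewrite -addn1 iotaD count_cat IH /= add0n addn0; slia.
Qed.

Definition LA {n} (d : 'I_n -> bool) : seq 'I_n := [seq i <- enum 'I_n | ~~ d i].
Definition LB {n} (d : 'I_n -> bool) : seq 'I_n := [seq i <- enum 'I_n | d i].
Definition LL {n} (d : 'I_n -> bool) : seq 'I_n := LA d ++ rev (LB d).

Lemma size_LAB {n} (d : 'I_n -> bool) : (size (LA d) + size (LB d))%N = n.
Proof.
rewrite /LA /LB !size_filter addnC.
by rewrite (count_predC d (enum 'I_n)) size_enum_ord.
Qed.

Lemma size_LL {n} (d : 'I_n -> bool) : size (LL d) = n.
Proof. by rewrite size_cat size_rev size_LAB. Qed.

Lemma uniq_LL {n} (d : 'I_n -> bool) : uniq (LL d).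
Proof.
have u : uniq (enum 'I_n) := enum_uniq _.
rewrite /LL cat_uniq rev_uniq /LA /LB !(filter_uniq _ u) andbT /=.
apply/hasP => -[x]; rewrite mem_rev !mem_filter => /andP [h1 _] /andP [h2 _].
by rewrite h1 in h2.
Qed.

Definition qf {n} (d : 'I_n -> bool) (a : 'I_n) : 'I_n := nth a (LL d) a.

Lemma qf_inj {n} (d : 'I_n -> bool) : injective (qf d).
Proof.
move=> a b; rewrite /qf (set_nth_default a b) ?size_LL //.
move/eqP; rewrite nth_uniq ?size_LL ?uniq_LL // => /eqP; exact: val_inj.
Qed.

Definition qd {n} (d : 'I_n -> bool) : {perm 'I_n} := perm (@qf_inj n d).
Definition wd {n} (d : 'I_n -> bool) : W n := ((qd d)^-1%g, [ffun i => d i]).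

Lemma sorted_mapval {n} (P : pred 'I_n) : sorted ltn (map val (filter P (enum 'I_n))).
Proof.
apply: (subseq_sorted ltn_trans (map_subseq val (filter_subseq P (enum 'I_n)))).
by rewrite val_enum_ord iota_ltn_sorted.
Qed.

Lemma qd_d {n} (d : 'I_n -> bool) (a : 'I_n) : d (qd d a) = (size (LA d) <= a)%N.
Proof.
rewrite permE /qf /LL nth_cat.
case: ltnP => h.
  by have := mem_nth a h; rewrite mem_filter => /andP [/negbTE ->].
have h2 : (a - size (LA d) < size (rev (LB d)))%N.
  by rewrite size_rev; have := size_LAB d; have := ltn_ord a; slia.
by have := mem_nth a h2; rewrite mem_rev mem_filter => /andP [->].
Qed.

Lemma qd_A {n} (d : 'I_n -> bool) (a : 'I_n) : (a < size (LA d))%N ->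
  val (qd d a) = nth 0 (map val (LA d)) a.
Proof. by move=> h; rewrite permE /qf /LL nth_cat h (nth_map a). Qed.

Lemma qd_B {n} (d : 'I_n -> bool) (a : 'I_n) : (size (LA d) <= a)%N ->
  val (qd d a) = nth 0 (map val (LB d)) (n.-1 - a).
Proof.
move=> h; have hs := size_LAB d; have ha := ltn_ord a.
rewrite permE /qf /LL nth_cat ltnNge h /= nth_rev; last by rewrite ?size_rev; slia.
rewrite (nth_map a); last by slia.
congr (val (nth _ _ _)); slia.
Qed.

Lemma count_filterN {T : Type} (a p : pred T) (s : seq T) :
  (count a [seq x <- s | ~~ p x] + count a [seq x <- s | p x])%N = count a s.
Proof. by elim: s => //= x s IH; case: (p x) => /=; rewrite -IH; lia. Qed.

Lemma count_AB {n} (d : 'I_n -> bool) x : (x <= n)%N ->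
  (count (fun y => y < x)%N (map val (LA d)) + count (fun y => y < x)%N (map val (LB d)))%N = x.
Proof.
move=> hx; rewrite !count_map /LA /LB count_filterN -count_map val_enum_ord count_iota_lt.
slia.
Qed.

Lemma ones_LB {n} (d : 'I_n -> bool) : ones d = map val (LB d).
Proof. by []. Qed.

Lemma S_mem {n} (d : 'I_n -> bool) (a c : 'I_n) (b : bool) :
  (((a, c), b) \in S d) = [&& b, (n - size (ones d) <= c)%N,
     (nth 0 (ones d) (n.-1 - c) - (n.-1 - c) <= a)%N & (a <= c)%N].
Proof.
rewrite inE /=; case: b => //=.
have hc := ltn_ord c.
have hK : (size (ones d) <= n)%N by rewrite ones_LB size_map; have := size_LAB d; slia.
apply/hasP/idP.
  move=> [m]; rewrite mem_iota add0n => hm /and3P [/eqP e h1 h2].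
  have em : m = (n.-1 - c)%N by slia.
  rewrite -em h1 /=; apply/andP; split; slia.
move=> /and3P [h1 h2 h3]; exists (n.-1 - c)%N.
  by rewrite mem_iota add0n; slia.
rewrite h2 /=; apply/andP; split; slia.
Qed.

Lemma Phi_wd {n} (d : 'I_n -> bool) : Phi (wd d) = S d.
Proof.
apply/setP => -[[a c] b].
rewrite PhiE S_mem /posroot /phicond /wd /= invgK !ffunE !qd_d ones_LB size_map.
have hs := size_LAB d.
have srtA : sorted ltn (map val (LA d)) := sorted_mapval _.
have srtB : sorted ltn (map val (LB d)) := sorted_mapval _.
set nA := map val (LA d) in srtA *; set nB := map val (LB d) in srtB *.
have szA : size nA = size (LA d) by rewrite size_map.
have szB : size nB = size (LB d) by rewrite size_map.
set K := size (LB d) in hs szB *; set nK := size (LA d) in hs szA *.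
have ha := ltn_ord a; have hc := ltn_ord c.
set m := (n.-1 - c)%N; set T := nth 0 nB m.
have hfc : (nK <= c)%N -> val (qd d c) = T by move=> h; rewrite qd_B.
have hTn : (nK <= c)%N -> (T < n)%N by move=> h; rewrite -hfc //; exact: ltn_ord.
have cB : (nK <= c)%N -> count (fun y => y < T)%N nB = m.
  move=> h; have hmK : (m < size nB)%N by rewrite szB; slia.
  apply/eqP; rewrite eqn_leq; apply/andP; split.
    by have := @sorted_nth_lt nB m T srtB hmK; rewrite -/T ltnn => e; rewrite leqNgt -e.
  case hm0 : m => [|m'] //.
  have hm' : (m' < size nB)%N by slia.
  have := @sorted_nth_lt nB m' T srtB hm'.
  have -> : (nth 0 nB m' < T)%N.
    rewrite /T hm0; apply: (sorted_ltn_nth ltn_trans 0 srtB); rewrite ?inE; slia.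
  by [].
have cA : (nK <= c)%N -> count (fun y => y < T)%N nA = (T - m)%N.
  move=> h; have := @count_AB n d T (ltnW (hTn h)); rewrite -/nA -/nB cB //; slia.
have hF6 : (nK <= c)%N -> (T - m <= nK)%N.
  by move=> h; rewrite -cA // -szA count_size.
have hF5 : (a < nK)%N -> (nK <= c)%N -> (val (qd d a) < T)%N = (a < T - m)%N.
  by move=> h1 h2; rewrite qd_A // sorted_nth_lt ?cA // szA.
have hF2 : (a < c)%N -> (c < nK)%N -> (val (qd d a) < val (qd d c))%N.
  move=> h1 h2; rewrite !qd_A //; try slia.
  by apply: (sorted_ltn_nth ltn_trans 0 srtA); rewrite ?inE ?szA //; slia.
have hF3 : (nK <= a)%N -> (a < c)%N -> (val (qd d c) < val (qd d a))%N.
  move=> h1 h2; rewrite !qd_B //; try slia.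
  by apply: (sorted_ltn_nth ltn_trans 0 srtB); rewrite ?inE ?szB //; slia.
have hne : a != c -> val (qd d a) != val (qd d c).
  by move=> h; rewrite (inj_eq val_inj) perm_eq_inj.
case: (a =P c) => [e|nac].
  by subst c; case: b => /=; slia.
have nac' : (a == c) = false by apply/eqP.
move/negP/negP: nac' => nac'; have hne' := hne nac'.
rewrite ?(negbTE nac').
have nacn : (a : nat) != c by rewrite (inj_eq val_inj).
case: b => /=; rewrite ?addbT ?addbF; case: (ltnP (qd d a) (qd d c)) => h /=; slia.
Qed.


Lemma inWp_wd {n} (d : 'I_n -> bool) : inWp (wd d).
Proof.
rewrite /inWp Phi_wd; apply/subsetP => -[[a c] b]; rewrite S_mem inE /=.
by case/and4P => -> _ _ ->.
Qed.

Lemma wd2 {n} (d : 'I_n -> bool) (k : 'I_n) : (wd d).2 k = d k.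
Proof. by rewrite /wd /= ffunE. Qed.

Lemma PhiS_wd {n} (w : W n) (d : 'I_n -> bool) : Phi w = S d -> w = wd d.
Proof. by move=> e; apply: Phi_inj; rewrite e Phi_wd. Qed.

Local Open Scope ring_scope.

Theorem mainTheorem5 (n : nat) (lam : 'I_n -> int) (Hn : (0 < n)%N)
  (Hdom : (forall i j : 'I_n, (i <= j)%N -> lrho lam j <= lrho lam i) /\
          (forall i : 'I_n, 0 <= lrho lam i))
  (Hadj : forall k : 'I_n, (k.+1 < n)%N ->
            ~~ (singular lam k && singular lam (nxt k))) :
  ((forall k : 'I_n, k.+1 = n -> ~~ singular lam k) ->
     WpS_is lam (fun d => forall k : 'I_n, singular lam k ->
                   d k = false /\ d (nxt k) = true)) /\
  (forall k0 : 'I_n, k0.+1 = n -> singular lam k0 ->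
     WpS_is lam (fun d => d k0 = false /\
                   forall k : 'I_n, (k.+1 < n)%N -> singular lam k ->
                   d k = false /\ d (nxt k) = true)).
Proof.
split.
- move=> hnl; split.
  + move=> w d [hw hs] hP k hk.
    have kn : (k.+1 < n)%N.
      case: (ltnP k.+1 n) => // h; have e : k.+1 = n by have := ltn_ord k; lia.
      by move: (hnl k e); rewrite hk.
    have := (@cond_lt n w k hw kn).1 (hs k hk).
    by rewrite (@PhiS_wd n w d hP) !wd2.
  + move=> d hP; exists (wd d); split; last exact: Phi_wd.
    split; first exact: inWp_wd.
    move=> k hk.
    have kn : (k.+1 < n)%N.
      case: (ltnP k.+1 n) => // h; have e : k.+1 = n by have := ltn_ord k; lia.
      by move: (hnl k e); rewrite hk.
    by apply/(@cond_lt n (wd d) k (inWp_wd d) kn); rewrite !wd2; apply: hP.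
- move=> k0 hk0 hs0; split.
  + move=> w d [hw hs] hP.
    have ew := @PhiS_wd n w d hP.
    split.
      have kn : ~~ (k0.+1 < n)%N by rewrite hk0 ltnn.
      by have := (@cond_last n w k0 hw kn).1 (hs k0 hs0); rewrite ew wd2.
    move=> k kn hk.
    by have := (@cond_lt n w k hw kn).1 (hs k hk); rewrite ew !wd2.
  + move=> d [hd0 hP]; exists (wd d); split; last exact: Phi_wd.
    split; first exact: inWp_wd.
    move=> k hk.
    case: (ltnP k.+1 n) => kn.
      by apply/(@cond_lt n (wd d) k (inWp_wd d) kn); rewrite !wd2; apply: hP.
    have ek : k = k0 by apply/val_inj; have := ltn_ord k; simpl in *; lia.
    subst k.
    by apply/(@cond_last n (wd d) k0 (inWp_wd d)); [rewrite -ltnNge | rewrite wd2].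
Qed.
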